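(* Consider the generalized trimmed lasso problem $\min_{x_0,\ldots,x_L} f(x_0,\ldots,x_L)+\sum_{l=1}^L\gamma_lT_{K_l,m_l,p_l}(D_lx_l-c_l)$, and suppose that for each $l\in[L]$ a point $\overline{x}_l$ with $D_l\overline{x}_l=c_l$ is given. (a) If $f(x_0,\ldots,x_L)=\frac12\|b-\sum_{l=0}^LA_lx_l\|_2^2$ with $b\in\mathbb{R}^q$, $A_l\in\mathbb{R}^{q\times n_l}$, then every d-stationary point $(x_0^*,\ldots,x_L^* )$ satisfies $T_{K_l,m_l,p_l}(D_lx_l^*-c_l)=0$ for all $l\in[L]$ provided that for all $l\in[L]$ $$\gamma_l>\frac{1}{\sigma_{K_l,m_l,p_l}(D_l)}\|A_l\|_2\Big\|b-\sum_{k=1}^LA_k\overline{x}_k\Big\|_2.$$ (b) If $n_0=0$, $p_l=1$, $D_l=I$, $c_l=0$ for all $l$, and $f(x_1,\ldots,x_L)=\frac12\|b-\sum_{l=1}^LA_lx_l\|_2^2+\sum_{l=1}^L\eta_l\|x_l\|_1$ with $b\in\mathbb{R}^q$, $A_l\in\mathbb{R}^{q\times n_l}$, $\eta_l\ge0$, then every d-stationary point $(x_1^*,\ldots,x_L^* )$ satisfies $T_{K_l,n_l,1}(x_l^* )=0$ for all $l$ provided $\gamma_l>\max_{j\in[n_l]}\|a_j^{(l)}\|_2\|b\|_2-\eta_l$ for all $l$, where $a_j^{(l)}$ is the $j$-th column of $A_l$.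
   Context: Trimmed $\ell_1$ norm: $T_{K,m,p}(z)=\min_{\Lambda\subset[m],|\Lambda|=m-K}\sum_{i\in\Lambda}\|z_i\|_2$ for $z=(z_1^\top,\ldots,z_m^\top)^\top$, $z_i\in\mathbb{R}^p$, $K\in\{0,\ldots,m-1\}$. Data: $n_0\ge0$, $\gamma_l>0$, $K_l\in\{0,\ldots,m_l-1\}$, $c_l\in\mathbb{R}^{m_lp_l}$, $D_l\ne0$ an $m_lp_l\times n_l$ matrix. $\|A\|_2$ is the spectral norm (largest singular value). d-stationary: directional derivative of the objective at the point is $\ge0$ in every direction. $\sigma_{\min}(A)$ = smallest nonzero singular value. For $D$ with $p\times n$ blocks and $(D)_\Lambda$ the submatrix of blocks indexed by $\Lambda$: $\sigma_{K,m,p}(D)=\sigma_{\min}(D)$ if $D$ is surjective, else $\min\{\sigma_{\min}((D)_\Lambda)\mid \Lambda\subset[m],|\Lambda|=m-K,(D)_\Lambda\ne0\}$. *)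

(* Defs.v *)
From HB Require Import structures.
From mathcomp Require Import all_boot all_order all_algebra.
From mathcomp Require Import all_classical all_reals all_analysis.
Set Implicit Arguments. Unset Strict Implicit. Unset Printing Implicit Defensive.
Import Order.TTheory GRing.Theory Num.Theory.
Import numFieldNormedType.Exports.
Local Open Scope classical_set_scope.
Local Open Scope ring_scope.

(* block i (0-based) of z in R^(m p) occupies entries i*p, ..., i*p+p-1 *)
Lemma blk_idx_proof (m p : nat) (i : 'I_m) (j : 'I_p) : (i * p + j < m * p)%N.
Proof.
case: i j => i Hi [j Hj] /=.
have -> : (m = i.+1 + (m - i.+1))%N by rewrite subnKC.
rewrite mulnDl mulSn; apply: (leq_trans (n := i * p + p)%N).
  by rewrite ltn_add2l. by rewrite addnC leq_addr.
Qed.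

Definition blk_idx (m p : nat) (i : 'I_m) (j : 'I_p) : 'I_(m * p) :=
  Ordinal (blk_idx_proof i j).

Lemma blk_div_proof (a p : nat) (k : 'I_(a * p)) : (k %/ p < a)%N.
Proof.
case: p k => [|p] k; first by case: k => k; rewrite muln0.
by rewrite ltn_divLR // ltn_ord.
Qed.

Lemma blk_mod_proof (a p : nat) (k : 'I_(a * p)) : (k %% p < p)%N.
Proof.
case: p k => [|p] k; first by case: k => k; rewrite muln0.
by rewrite ltn_pmod.
Qed.

Definition blk_div (a p : nat) (k : 'I_(a * p)) : 'I_a := Ordinal (blk_div_proof k).
Definition blk_mod (a p : nat) (k : 'I_(a * p)) : 'I_p := Ordinal (blk_mod_proof k).

Definition norm2 {R : realType} {n : nat} (x : 'cV[R]_n) : R :=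
  Num.sqrt (\sum_(i < n) x i 0 ^+ 2).
Definition norm1 {R : realType} {n : nat} (x : 'cV[R]_n) : R :=
  \sum_(i < n) `|x i 0|.

Definition block {R : realType} {m p : nat} (z : 'cV[R]_(m * p)) (i : 'I_m) : 'cV[R]_p :=
  \col_(j < p) z (blk_idx i j) 0.

Definition trimmed {R : realType} (K m p : nat) (z : 'cV[R]_(m * p)) : R :=
  inf [set t : R | exists Lam : {set 'I_m},
         #|Lam| = (m - K)%N /\ t = \sum_(i in Lam) norm2 (block z i)].

Definition singular_value {R : realType} {a n : nat} (A : 'M[R]_(a, n)) (s : R) : Prop :=
  0 <= s /\ eigenvalue (A^T *m A) (s ^+ 2).

Definition spec_norm {R : realType} {a n : nat} (A : 'M[R]_(a, n)) : R :=
  sup [set s | singular_value A s].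

Definition sigma_min {R : realType} {a n : nat} (A : 'M[R]_(a, n)) : R :=
  inf [set s | singular_value A s /\ s != 0].

(* (D)_Lam : the submatrix of D made of the p x n row blocks indexed by Lam *)
Definition subblocks {R : realType} {m p n : nat} (D : 'M[R]_(m * p, n))
  (Lam : {set 'I_m}) : 'M[R]_(#|Lam| * p, n) :=
  \matrix_(k, j) D (blk_idx (enum_val (blk_div k)) (blk_mod k)) j.

(* D surjective as a map R^n -> R^(m p) iff its rank is m p *)
Definition sigmaK {R : realType} (K m p n : nat) (D : 'M[R]_(m * p, n)) : R :=
  if \rank D == (m * p)%N then sigma_min D
  else inf [set s | exists Lam : {set 'I_m},
              [/\ #|Lam| = (m - K)%N, subblocks D Lam != 0 & s = sigma_min (subblocks D Lam)]].

Definition dstationary {R : realType} {L : nat} {n0 : nat} {n : 'I_L -> nat}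
  (Phi : 'cV[R]_n0 -> (forall l : 'I_L, 'cV[R]_(n l)) -> R)
  (x0 : 'cV[R]_n0) (xs : forall l : 'I_L, 'cV[R]_(n l)) : Prop :=
  forall (d0 : 'cV[R]_n0) (ds : forall l : 'I_L, 'cV[R]_(n l)),
    exists2 v : R,
      (fun t : R => (Phi (x0 + t *: d0) (fun l => xs l + t *: ds l) - Phi x0 xs) / t)
        @ 0%R^'+ --> v
      & 0 <= v.

Arguments trimmed {R} K m p z.
Arguments sigmaK {R} K m p n D.
Arguments blk_idx {m p} i j.

(* Main.v *)
Require Import Defs.
From HB Require Import structures.
From mathcomp Require Import all_boot all_order all_algebra.
From mathcomp Require Import all_classical all_reals all_analysis.
From mathcomp Require Import complex polyrcf.
From mathcomp Require Import ring lra zify.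
Import Order.TTheory GRing.Theory Num.Theory.
Import numFieldNormedType.Exports.
Local Open Scope classical_set_scope.
Local Open Scope ring_scope.

Module MCore.
Import Order.TTheory GRing.Theory Num.Theory Num.Def.
Local Open Scope ring_scope.
Set Implicit Arguments. Unset Strict Implicit.
Local Open Scope sesquilinear_scope.
Local Open Scope complex_scope.
Local Open Scope ring_scope.

Section Core.
Variable R : realType.
Local Notation C := (R[i]).
Local Notation cR := (real_complex R).
Local Notation ct M := (map_mx conjC (trmx M)).

Definition n1 (z : C) : R := complex.Re z ^+ 2 + complex.Im z ^+ 2.
Definition ncv n (w : 'cV[C]_n) : R := \sum_i n1 (w i 0).

Lemma n1_ge0 z : 0 <= n1 z.
Proof. by rewrite /n1 addr_ge0 // sqr_ge0. Qed.

Lemma n1E z : (n1 z)%:C = z^*%C * z.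
Proof. by rewrite /n1 add_Re2_Im2 sqr_normc mulrC. Qed.

Lemma tmxM m k l (X : 'M[C]_(m,k)) (Y : 'M[C]_(k,l)) : ct (X *m Y) = ct Y *m ct X.
Proof. by rewrite trmx_mul map_mxM. Qed.

Lemma ncvE n (w : 'cV[C]_n) : (ncv w)%:C = (ct w *m w) 0 0.
Proof.
rewrite /ncv rmorph_sum mxE; apply: eq_bigr => i _.
by rewrite !mxE; exact: n1E.
Qed.

Lemma ncv_ge0 n (w : 'cV[C]_n) : 0 <= ncv w.
Proof. by apply: sumr_ge0 => i _; exact: n1_ge0. Qed.

Lemma ncv_eq0 n (w : 'cV[C]_n) : ncv w = 0 -> w = 0.
Proof.
move=> /eqP; rewrite psumr_eq0; last by move=> i _; exact: n1_ge0.
move=> /allP H; apply/matrixP => i j; rewrite (ord1 j) mxE.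
have := H i (mem_index_enum _).
rewrite /n1 paddr_eq0 ?sqr_ge0 // !sqrf_eq0 => /andP[/eqP hr /eqP hi].
by rewrite [w i 0]complexE hr hi mulr0 addr0.
Qed.


Lemma real_eig_ge0 k n (B : 'M[R]_(k, n)) a :
  eigenvalue (B^T *m B) a -> 0 <= a.
Proof.
move=> /eigenvalueP [v hv vn0].
have h1 : (v *m (B^T *m B) *m v^T) 0 0 = a * (v *m v^T) 0 0.
  by rewrite hv -scalemxAl mxE.
have h2 : (v *m (B^T *m B) *m v^T) 0 0 = \sum_j ((v *m B^T) 0 j) ^+ 2.
  have -> : v *m (B^T *m B) *m v^T = (v *m B^T) *m (v *m B^T)^T.
    by rewrite trmx_mul trmxK !mulmxA.
  rewrite mxE.
  by apply: eq_bigr => j _; rewrite [X in _ * X]mxE expr2.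
have h3 : (v *m v^T) 0 0 = \sum_j (v 0 j) ^+ 2.
  by rewrite mxE; apply: eq_bigr => j _; rewrite [X in _ * X]mxE expr2.
have pos : 0 < \sum_j (v 0 j) ^+ 2.
  rewrite lt_def sumr_ge0 ?andbT; last by move=> j _; rewrite sqr_ge0.
  apply: contra vn0; rewrite psumr_eq0; last by move=> j _; rewrite sqr_ge0.
  move=> /allP H; apply/eqP/rowP => j; rewrite mxE.
  by have := H j (mem_index_enum _); rewrite sqrf_eq0 => /eqP.
have : 0 <= a * \sum_j (v 0 j) ^+ 2.
  by rewrite -h3 -h1 h2 sumr_ge0 // => j _; rewrite sqr_ge0.
by rewrite pmulr_lge0.
Qed.

Lemma spectral_real k n (B : 'M[R]_(k, n)) :
  exists (P : 'M[C]_n) (lam : 'I_n -> R),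
  [/\ P *m ct P = 1%:M, ct P *m P = 1%:M,
      forall i, 0 <= lam i /\ eigenvalue (B^T *m B) (lam i) &
      map_mx cR (B^T *m B) = ct P *m diag_mx (\row_i (lam i)%:C) *m P].
Proof.
set M := B^T *m B.
set Mc := map_mx cR M.
have herm : Mc \is hermsymmx.
  apply/is_hermitianmxP; rewrite expr0 scale1r.
  apply/matrixP => i j; rewrite !mxE /M.
  have -> : conjC (\sum_j0 B^T j j0 * B j0 i)%:C = (\sum_j0 B^T j j0 * B j0 i)%:C.
    exact: conjc_real.
  congr (_ %:C); apply: eq_bigr => l _; rewrite !mxE mulrC //.
have /orthomx_spectralP Mdec := hermitian_normalmx herm.
set P := spectralmx Mc in Mdec.
set sp := spectral_diag Mc in Mdec.
have Pu : P \is unitarymx := spectral_unitarymx Mc.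
have PPt : P *m ct P = 1%:M by apply/unitarymxP.
have PtP : ct P *m P = 1%:M.
  by rewrite -invmx_unitary // mulVmx // spectral_unit.
have spr := hermitian_spectral_diag_real herm.
pose lam i := complex.Re (sp 0 i).
have splam i : sp 0 i = (lam i)%:C.
  by rewrite /lam RRe_real //; exact: (mxOverP spr 0 i).
have spE : sp = \row_i (lam i)%:C by apply/rowP => i; rewrite mxE splam.
rewrite invmx_unitary // in Mdec.
have eigc i : eigenvalue Mc (sp 0 i).
  apply/eigenvalueP; exists (row i P).
    have : P *m Mc = diag_mx sp *m P.
      by rewrite {1}Mdec !mulmxA PPt mul1mx.
    move=> /(congr1 (row i)); rewrite -!row_mul => ->.
    by rewrite mul_diag_mx; apply/rowP => j; rewrite !mxE.
  apply/eqP => hr.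
  have := congr1 (fun X : 'M[C]_n => X i i) PPt.
  rewrite !mxE eqxx /= (eq_bigr (fun _ => 0)); first by rewrite big1 // => /eqP; rewrite eq_sym oner_eq0.
  by move=> j _; have := congr1 (fun X : 'rV[C]_n => X 0 j) hr; rewrite !mxE => ->; rewrite mul0r.
exists P, lam; split => //; last by rewrite -spE.
move=> i; suff ev : eigenvalue M (lam i) by split=> //; exact: real_eig_ge0 ev.
have := eigc i; rewrite splam !eigenvalue_root_char -map_char_poly.
by rewrite fmorph_root.
Qed.


Definition sqv m (x : 'cV[R]_m) : R := \sum_i (x i 0) ^+ 2.

Lemma ncv_real m (x : 'cV[R]_m) : ncv (map_mx cR x) = sqv x.
Proof.
by apply: eq_bigr => i _; rewrite mxE /n1 /= expr0n /= addr0.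
Qed.

Lemma ct_real k n (B : 'M[R]_(k, n)) : ct (map_mx cR B) = map_mx cR B^T.
Proof. by apply/matrixP => i j; rewrite !mxE; exact: conjc_real. Qed.

Lemma quad_form k n (B : 'M[R]_(k, n)) (P : 'M[C]_n) (lam : 'I_n -> R) :
  map_mx cR (B^T *m B) = ct P *m diag_mx (\row_i (lam i)%:C) *m P ->
  forall z : 'cV[C]_n,
  ncv (map_mx cR B *m z) = \sum_i lam i * n1 ((P *m z) i 0).
Proof.
move=> Mdec z; apply: complexI.
rewrite ncvE tmxM ct_real -mulmxA (mulmxA (map_mx cR B^T)) -map_mxM Mdec.
rewrite -!mulmxA !mulmxA -tmxM -(mulmxA _ P) -mulmxA mul_diag_mx mxE rmorph_sum.
apply: eq_bigr => i _; rewrite !mxE rmorphM /=.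
by rewrite n1E mulrCA.
Qed.

Lemma ncv_unitary n (P : 'M[C]_n) (z : 'cV[C]_n) :
  ct P *m P = 1%:M -> ncv (P *m z) = ncv z.
Proof.
move=> PtP; apply: complexI; rewrite !ncvE tmxM -mulmxA (mulmxA (ct P)) PtP.
by rewrite mul1mx.
Qed.

Lemma ReBM k n m (B : 'M[R]_(k, n)) (w : 'M[C]_(n, m)) :
  map_mx (@complex.Re R) (map_mx cR B *m w) = B *m map_mx (@complex.Re R) w.
Proof.
apply/matrixP => i j; rewrite !mxE raddf_sum; apply: eq_bigr => l _.
by rewrite !mxE; case: (w l j) => a b /=; rewrite mul0r subr0.
Qed.

Lemma svd_facts k n (B : 'M[R]_(k, n)) :
  exists lam : 'I_n -> R,
  [/\ forall i, 0 <= lam i /\ eigenvalue (B^T *m B) (lam i),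
      forall mu, (forall i, lam i <= mu) ->
        forall x, sqv (B *m x) <= mu * sqv x &
      forall mu, 0 <= mu -> (forall i, lam i != 0 -> mu <= lam i) ->
        forall u : 'cV[R]_n, exists d, B *m d = B *m u /\ mu * sqv d <= sqv (B *m u)].
Proof.
have [P [lam [PPt PtP hlam Mdec]]] := spectral_real B.
have Q := quad_form Mdec.
exists lam; split => //.
  move=> mu hmu x.
  rewrite -ncv_real map_mxM Q -ncv_real -(ncv_unitary _ PtP) /ncv mulr_sumr.
  apply: ler_sum => i _; apply: ler_wpM2r; first exact: n1_ge0.
  exact: hmu.
move=> mu mu0 hmu u.
set uc := map_mx cR u.
set v := P *m uc.
set v' := \col_i (if lam i == 0 then 0 else v i 0).
set dc := ct P *m v'.
have Pdc : P *m dc = v' by rewrite /dc mulmxA PPt mul1mx.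
have Bdc : map_mx cR B *m dc = map_mx cR B *m uc.
  apply/eqP; rewrite -subr_eq0; apply/eqP; rewrite -mulmxBr.
  apply: ncv_eq0; rewrite Q big1 // => i _.
  rewrite mulmxBr Pdc !mxE.
  by case: eqP => [->|_]; rewrite ?mul0r // subrr /n1 /= expr0n /= addr0 mulr0.
pose d := map_mx (@complex.Re R) dc.
exists d; split.
  rewrite /d -ReBM Bdc ReBM; congr (_ *m _); apply/matrixP => i j.
  by rewrite !mxE.
have e1 : sqv (B *m u) = ncv (map_mx cR B *m dc).
  by rewrite Bdc -map_mxM ncv_real.
have e2 : sqv d <= ncv dc.
  apply: ler_sum => i _; rewrite /n1 mxE lerDl sqr_ge0 //.
rewrite e1 Q Pdc; apply: (le_trans (ler_wpM2l mu0 e2)).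
rewrite -(ncv_unitary _ PtP) Pdc /ncv mulr_sumr; apply: ler_sum => i _.
rewrite mxE; case: eqP => [->|/eqP h]; first by rewrite /n1 /= expr0n /= addr0 !mulr0.
by apply: ler_wpM2r; [exact: n1_ge0 | exact: hmu].
Qed.

End Core.

End MCore.
Import MCore.

Module MGen.
Import Order.TTheory GRing.Theory Num.Theory.
Import numFieldNormedType.Exports.
Set Implicit Arguments. Unset Strict Implicit.
Local Open Scope classical_set_scope.
Local Open Scope ring_scope.

Section Gen.
Variable R : realType.

Lemma fin_min (s : seq R) : forall (S : set R), S `<=` [set x | x \in s] -> S !=set0 ->
  exists2 x, S x & forall y, S y -> x <= y.
Proof.
elim: s => [|a s IH] S sub [x0 Sx0]; first by have := sub _ Sx0.
pose S' := [set y | S y /\ y != a].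
have sub' : S' `<=` [set x | x \in s].
  move=> y [Sy ya]; have := sub _ Sy; rewrite /= inE => /orP[/eqP ya'|//].
  by rewrite ya' eqxx in ya.
have [[y0 Sy0]|S'0] := pselect (S' !=set0).
  have [x [Sx xa] hx] := IH S' sub' (ex_intro _ y0 Sy0).
  have [Sa|nSa] := pselect (S a).
    exists (Order.min a x); first by rewrite /Order.min; case: ifP.
    move=> y Sy; have [->|ya] := eqVneq y a; first by rewrite ge_min lexx.
    by rewrite ge_min hx ?orbT.
  exists x => // y Sy; apply: hx; split => //.
  by apply/eqP => ya; rewrite ya in Sy.
have Sx0a : x0 = a.
  apply/eqP; apply: contrapT => h; apply: S'0; exists x0; split => //.
  exact/negP.
exists a; first by rewrite -Sx0a.
move=> y Sy; have [->|ya] := eqVneq y a; first by [].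
by exfalso; apply: S'0; exists y.
Qed.

Lemma fin_max (s : seq R) (S : set R) : S `<=` [set x | x \in s] -> S !=set0 ->
  exists2 x, S x & forall y, S y -> y <= x.
Proof.
move=> sub [x0 Sx0].
have sub' : (-%R @` S) `<=` [set x | x \in map -%R s].
  by move=> _ [y Sy <-] /=; rewrite map_f //; exact: sub.
have [x [y Sy <-] hx] := fin_min sub' (ex_intro _ (- x0) (ex_intro2 _ _ x0 Sx0 erefl)).
exists y => // z Sz; rewrite -lerN2; apply: hx; by exists z.
Qed.

Lemma fin_inf (s : seq R) (S : set R) : S `<=` [set x | x \in s] -> S !=set0 ->
  S (inf S) /\ forall y, S y -> inf S <= y.
Proof.
move=> sub ne; have [x Sx hx] := fin_min sub ne.
have -> : inf S = x.
  apply/le_anti/andP; split.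
    by apply: ge_inf => //; exists x => y /hx.
  by apply: lb_le_inf => //; exists x.
by [].
Qed.

Lemma fin_sup (s : seq R) (S : set R) : S `<=` [set x | x \in s] -> S !=set0 ->
  S (sup S) /\ forall y, S y -> y <= sup S.
Proof.
move=> sub ne; have [x Sx hx] := fin_max sub ne.
have -> : sup S = x.
  apply/le_anti/andP; split.
    by apply: ge_sup => //; exact: hx.
  by apply: ub_le_sup => //; exists x => y /hx.
by [].
Qed.

Lemma lim_le_affine (Q : R -> R) v a B :
  Q t @[t --> 0^'+] --> v -> (forall t, 0 < t -> t <= 1 -> Q t <= a + t * B) -> v <= a.
Proof.
move=> hQ hle.
have hg : (fun t => a + t * B) t @[t --> 0^'+] --> a.
  rewrite -[X in _ --> X](addr0 a) -[X in a + X](mul0r B).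
  apply: cvgD; first exact: cvg_cst.
  apply: cvgM; last exact: cvg_cst.
  exact: cvg_at_right_filter cvg_id.
apply: (ler_cvg_to hQ hg).
near=> t; apply: hle.
  by near: t; exact: nbhs_right_gt.
by near: t; apply: nbhs_right_ltW; exact: ltr01.
Unshelve. all: by end_near.
Qed.

End Gen.

End MGen.
Import MGen.

Module MVec.
Import Order.TTheory GRing.Theory Num.Theory.
Import numFieldNormedType.Exports.
Set Implicit Arguments. Unset Strict Implicit.
Local Open Scope classical_set_scope.
Local Open Scope ring_scope.

Section Vec.
Variable R : realType.

Definition dot m (x y : 'cV[R]_m) : R := \sum_i x i 0 * y i 0.

Lemma norm2E m (x : 'cV[R]_m) : norm2 x = Num.sqrt (sqv x).
Proof. by []. Qed.

Lemma sqv_ge0 m (x : 'cV[R]_m) : 0 <= sqv x.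
Proof. by apply: sumr_ge0 => i _; rewrite sqr_ge0. Qed.

Lemma norm2_ge0 m (x : 'cV[R]_m) : 0 <= norm2 x.
Proof. exact: sqrtr_ge0. Qed.

Lemma norm2_sqr m (x : 'cV[R]_m) : norm2 x ^+ 2 = sqv x.
Proof. by rewrite norm2E sqr_sqrtr // sqv_ge0. Qed.

Lemma sqv_eq0 m (x : 'cV[R]_m) : sqv x = 0 -> x = 0.
Proof.
move=> /eqP; rewrite psumr_eq0; last by move=> i _; rewrite sqr_ge0.
move=> /allP H; apply/matrixP => i j; rewrite (ord1 j) mxE.
by have := H i (mem_index_enum _); rewrite sqrf_eq0 => /eqP.
Qed.

Lemma sqv_lin m (a b : R) (x y : 'cV[R]_m) :
  sqv (a *: x + b *: y) = a ^+ 2 * sqv x + 2 * a * b * dot x y + b ^+ 2 * sqv y.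
Proof.
rewrite /sqv /dot !mulr_sumr -!big_split /=; apply: eq_bigr => i _.
rewrite !mxE; ring.
Qed.

Lemma dotC m (x y : 'cV[R]_m) : dot x y = dot y x.
Proof. by apply: eq_bigr => i _; rewrite mulrC. Qed.

Lemma dot0r m (y : 'cV[R]_m) : dot 0 y = 0.
Proof. by rewrite /dot big1 // => i _; rewrite mxE mul0r. Qed.

Lemma CS m (x y : 'cV[R]_m) : dot x y <= norm2 x * norm2 y.
Proof.
have [hx|hx] := eqVneq (norm2 x) 0.
  have /sqv_eq0 -> : sqv x = 0 by rewrite -norm2_sqr hx expr0n.
  by rewrite dot0r mulr_ge0 // norm2_ge0.
have [hy|hy] := eqVneq (norm2 y) 0.
  have /sqv_eq0 -> : sqv y = 0 by rewrite -norm2_sqr hy expr0n.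
  by rewrite dotC dot0r mulr_ge0 // norm2_ge0.
have := sqv_ge0 (norm2 y *: x + (- norm2 x) *: y).
rewrite sqv_lin -!norm2_sqr.
have ha : 0 < norm2 x by rewrite lt_def hx norm2_ge0.
have hb : 0 < norm2 y by rewrite lt_def hy norm2_ge0.
set a := norm2 x; set b := norm2 y; set d := dot x y => h.
have hab : 0 < a * b by rewrite mulr_gt0.
have : d * (2 * (a * b)) <= (a * b) * (2 * (a * b)) by nra.
by rewrite ler_pM2r // mulr_gt0.
Qed.

Lemma sqvZ m a (x : 'cV[R]_m) : sqv (a *: x) = a ^+ 2 * sqv x.
Proof. by rewrite /sqv mulr_sumr; apply: eq_bigr => i _; rewrite mxE exprMn. Qed.

Lemma norm2Z m a (x : 'cV[R]_m) : norm2 (a *: x) = `|a| * norm2 x.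
Proof. by rewrite !norm2E sqvZ sqrtrM ?sqr_ge0 // sqrtr_sqr. Qed.

Lemma sqrt_sum_le (I : finType) (P : pred I) (F : I -> R) :
  (forall i, 0 <= F i) -> Num.sqrt (\sum_(i | P i) F i ^+ 2) <= \sum_(i | P i) F i.
Proof.
move=> F0; have S0 : 0 <= \sum_(i | P i) F i by apply: sumr_ge0.
rewrite -[X in _ <= X](ger0_norm S0) -sqrtr_sqr ler_sqrt; last by rewrite sqr_ge0.
rewrite expr2 mulr_suml; apply: ler_sum => i Pi.
rewrite expr2; apply: ler_wpM2l => //.
by rewrite (bigD1 i) //= lerDl sumr_ge0.
Qed.

End Vec.

End MVec.
Import MVec.

Module MTrim.
Import Order.TTheory GRing.Theory Num.Theory.
Import numFieldNormedType.Exports.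
Set Implicit Arguments. Unset Strict Implicit.
Local Open Scope classical_set_scope.
Local Open Scope ring_scope.

Lemma exists_card (m k : nat) : (k <= m)%N -> exists Lam : {set 'I_m}, #|Lam| = k.
Proof.
elim: k => [|k IH] hk; first by exists (finset.set0 : {set 'I_m}); rewrite cards0.
have [Lam hL] := IH (ltnW hk).
have : (0 < #|~: Lam|)%N.
  by rewrite cardsCs card_ord in hL; lia.
case/card_gt0P => i; rewrite inE => hi.
by exists (i |: Lam); rewrite cardsU1 hi hL.
Qed.

Lemma blk_divK a p (i : 'I_a) (j : 'I_p) : blk_div (blk_idx i j) = i.
Proof.
apply: val_inj => /=; have p0 : (0 < p)%N by case: j => j /= hj; lia.
by rewrite divnMDl // divn_small // addn0.
Qed.

Lemma blk_modK a p (i : 'I_a) (j : 'I_p) : blk_mod (blk_idx i j) = j.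
Proof. by apply: val_inj => /=; rewrite modnMDl modn_small. Qed.

Lemma blk_idxK a p (k : 'I_(a * p)) : blk_idx (blk_div k) (blk_mod k) = k.
Proof. by apply: val_inj => /=; rewrite -divn_eq. Qed.

Section Trim.
Variable R : realType.

Lemma sum_blk a p (F : 'I_(a * p) -> R) :
  \sum_k F k = \sum_(i < a) \sum_(j < p) F (blk_idx i j).
Proof.
rewrite pair_big /=.
rewrite (reindex (fun ij : 'I_a * 'I_p => blk_idx ij.1 ij.2)) //=.
exists (fun k => (blk_div k, blk_mod k)) => [[i j] _|k _] /=.
  by rewrite blk_divK blk_modK.
exact: blk_idxK.
Qed.

Lemma sqv_blk m p (z : 'cV[R]_(m * p)) :
  sqv z = \sum_(i < m) norm2 (block z i) ^+ 2.
Proof.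
rewrite /sqv sum_blk; apply: eq_bigr => i _.
by rewrite norm2_sqr /sqv; apply: eq_bigr => j _; rewrite mxE.
Qed.

Lemma blockD m p (z1 z2 : 'cV[R]_(m * p)) i : block (z1 + z2) i = block z1 i + block z2 i.
Proof. by apply/matrixP => j k; rewrite !mxE. Qed.

Lemma blockZ m p a (z : 'cV[R]_(m * p)) i : block (a *: z) i = a *: block z i.
Proof. by apply/matrixP => j k; rewrite !mxE. Qed.

Lemma blockN m p (z : 'cV[R]_(m * p)) i : block (- z) i = - block z i.
Proof. by apply/matrixP => j k; rewrite !mxE. Qed.

Lemma trimmed_spec K m p (z : 'cV[R]_(m * p)) :
  (exists2 Lam : {set 'I_m}, #|Lam| = (m - K)%N &
      trimmed K m p z = \sum_(i in Lam) norm2 (block z i)) /\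
  (forall Lam : {set 'I_m}, #|Lam| = (m - K)%N ->
      trimmed K m p z <= \sum_(i in Lam) norm2 (block z i)).
Proof.
set S := [set t : R | exists Lam : {set 'I_m},
         #|Lam| = (m - K)%N /\ t = \sum_(i in Lam) norm2 (block z i)].
have sub : S `<=` [set x | x \in [seq \sum_(i in Lam) norm2 (block z i) | Lam : {set 'I_m} <- enum [set: {set 'I_m}]]].
  move=> _ [Lam [_ ->]] /=; apply: (map_f (fun L : {set 'I_m} => \sum_(i in L) norm2 (block z i))); by rewrite mem_enum inE.
have ne : S !=set0.
  have [Lam hL] := exists_card (leq_subr K m).
  by exists (\sum_(i in Lam) norm2 (block z i)); exists Lam.
have [hS hinf] := fin_inf sub ne.
have [Lam [hL hv]] := hS.
rewrite /trimmed -/S.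
split; first by exists Lam.
by move=> L hL'; apply: hinf; exists L.
Qed.

Lemma trimmed_ge0 K m p (z : 'cV[R]_(m * p)) : 0 <= trimmed K m p z.
Proof.
have [[Lam _ ->] _] := trimmed_spec K z.
by apply: sumr_ge0 => i _; exact: norm2_ge0.
Qed.

End Trim.

End MTrim.
Import MTrim.

Module MSV.
Import Order.TTheory GRing.Theory Num.Theory.
Import numFieldNormedType.Exports.
Set Implicit Arguments. Unset Strict Implicit.
Local Open Scope classical_set_scope.
Local Open Scope ring_scope.

Section SV.
Variable R : realType.

Lemma sv_fin k n (B : 'M[R]_(k, n)) :
  [set s | singular_value B s] `<=`
  [set x | x \in map Num.sqrt (rootsR (char_poly (B^T *m B)))].
Proof.
move=> s [s0 ev] /=.
have -> : s = Num.sqrt (s ^+ 2) by rewrite sqrtr_sqr ger0_norm.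
apply: map_f.
have := roots_on_rootsR (monic_neq0 (char_poly_monic (B^T *m B))) (s ^+ 2).
rewrite in_itv /= -eigenvalue_root_char ev => <-.
by [].
Qed.

Lemma sv_of_lam k n (B : 'M[R]_(k, n)) a :
  0 <= a -> eigenvalue (B^T *m B) a -> singular_value B (Num.sqrt a).
Proof. by move=> a0 ev; split; [exact: sqrtr_ge0 | rewrite sqr_sqrtr]. Qed.

Lemma spec_norm_ge0 k n (B : 'M[R]_(k, n)) : 0 <= spec_norm B.
Proof.
rewrite /spec_norm.
have [[s hs]|h0] := pselect ([set s | singular_value B s] !=set0).
  have [hS _] := fin_sup (@sv_fin k n B) (ex_intro _ s hs).
  by case: hS.
have -> : [set s | singular_value B s] = set0.
  by apply/seteqP; split => x // hx; apply: h0; exists x.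
by rewrite sup0.
Qed.

Lemma spec_norm_bound k n (B : 'M[R]_(k, n)) (x : 'cV[R]_n) :
  sqv (B *m x) <= spec_norm B ^+ 2 * sqv x.
Proof.
have [lam [hlam LA1 _]] := svd_facts B.
apply: LA1 => i.
have [l0 ev] := hlam i.
have sv := sv_of_lam l0 ev.
have [_ hS] := fin_sup (@sv_fin k n B) (ex_intro _ _ sv).
have hs := hS _ sv.
have := spec_norm_ge0 B; rewrite /spec_norm => hge.
rewrite -(sqr_sqrtr l0) lerXn2r // ?nnegrE ?sqrtr_ge0 //.
Qed.

Lemma sigma_min_facts k n (B : 'M[R]_(k, n)) : B != 0 ->
  [/\ 0 < sigma_min B,
      forall s, singular_value B s -> s != 0 -> sigma_min B <= s &
      forall u, exists d, B *m d = B *m u /\ sigma_min B ^+ 2 * sqv d <= sqv (B *m u)].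
Proof.
move=> Bn0.
have [lam [hlam LA1 LA2]] := svd_facts B.
have [i li] : exists i, lam i != 0.
  apply: contrapT => hall; move: Bn0; apply/negP; rewrite negbK; apply/eqP.
  have h0 (x : 'cV[R]_n) : B *m x = 0.
    apply: (@sqv_eq0 R); apply/le_anti; rewrite sqv_ge0 andbT.
    rewrite -(mul0r (sqv x)); apply: LA1 => j.
    have [l0 _] := hlam j.
    by case: (eqVneq (lam j) 0) => [->//|hj]; exfalso; apply: hall; exists j.
  apply/matrixP => a b; have := congr1 (fun X : 'cV[R]_k => X a 0) (h0 (delta_mx b 0)).
  by rewrite -colE !mxE.
set Sm := [set s | singular_value B s /\ s != 0].
have sub : Sm `<=` [set x | x \in map Num.sqrt (rootsR (char_poly (B^T *m B)))].
  by move=> s [hs _]; exact: sv_fin.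
have [l0 ev] := hlam i.
have mem : Sm (Num.sqrt (lam i)).
  by split; [exact: sv_of_lam | rewrite sqrtr_eq0 -ltNge lt_def li].
have [[hsv hne] hinf] := fin_inf sub (ex_intro _ _ mem).
rewrite /sigma_min -/Sm.
have pos : 0 < inf Sm by rewrite lt_def hne; case: hsv.
split => //.
  by move=> s hs sn0; apply: hinf.
apply: LA2; first exact: ltW (exprn_gt0 _ pos).
move=> j lj; have [lj0 evj] := hlam j.
have mj : Sm (Num.sqrt (lam j)).
  by split; [exact: sv_of_lam | rewrite sqrtr_eq0 -ltNge lt_def lj].
rewrite -(sqr_sqrtr lj0) lerXn2r // ?nnegrE ?sqrtr_ge0 ?(ltW pos) //.
exact: hinf.
Qed.

End SV.

End MSV.
Import MSV.

Module MDir.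
Import Order.TTheory GRing.Theory Num.Theory.
Import numFieldNormedType.Exports.
Set Implicit Arguments. Unset Strict Implicit.
Local Open Scope classical_set_scope.
Local Open Scope ring_scope.

Section Dir.
Variable R : realType.
Variables (K m p n : nat) (D : 'M[R]_(m * p, n)) (c : 'cV[R]_(m * p)) (xbar x : 'cV[R]_n).
Hypotheses (hD : D != 0) (hDx : D *m xbar = c).

Lemma sub_row (L : {set 'I_m}) (v : 'cV[R]_n) r :
  (subblocks D L *m v) r 0 = (D *m v) (blk_idx (enum_val (blk_div r)) (blk_mod r)) 0.
Proof. by rewrite !mxE; apply: eq_bigr => j _; rewrite mxE. Qed.

Lemma sqv_sub (L : {set 'I_m}) (v : 'cV[R]_n) :
  sqv (subblocks D L *m v) = \sum_(i in L) norm2 (block (D *m v) i) ^+ 2.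
Proof.
rewrite /sqv sum_blk [RHS]big_enum_val; apply: eq_bigr => k _.
rewrite norm2_sqr /sqv; apply: eq_bigr => j _.
by rewrite sub_row blk_divK blk_modK [in RHS]mxE.
Qed.

Lemma norm2N k (v : 'cV[R]_k) : norm2 (- v) = norm2 v.
Proof. by rewrite -scaleN1r norm2Z normrN normr1 mul1r. Qed.

Lemma dir_exists :
  0 < trimmed K m p (D *m x - c) ->
  exists d : 'cV[R]_n, [/\ 0 < sigmaK K m p n D,
    forall t, 0 <= t -> t <= 1 ->
      trimmed K m p (D *m (x + t *: d) - c) <= (1 - t) * trimmed K m p (D *m x - c) &
    sigmaK K m p n D * norm2 d <= trimmed K m p (D *m x - c)].
Proof.
set z := D *m x - c => Tpos.
have [[Lam hL hT] _] := trimmed_spec K z.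
suff [d [sK0 hblk hsq]] : exists d, [/\ 0 < sigmaK K m p n D,
    forall i, i \in Lam -> block (D *m d) i = - block z i &
    sigmaK K m p n D ^+ 2 * sqv d <= \sum_(i in Lam) norm2 (block z i) ^+ 2].
  exists d; split => //.
    move=> t t0 t1.
    have [_ hle] := trimmed_spec K (D *m (x + t *: d) - c).
    apply: le_trans (hle _ hL) _.
    rewrite hT mulr_sumr le_eqVlt; apply/orP; left; apply/eqP; apply: eq_bigr => i hi.
    have -> : D *m (x + t *: d) - c = z + t *: (D *m d).
      by rewrite /z mulmxDr -scalemxAr addrAC.
    rewrite blockD blockZ hblk // scalerN -{1}(scale1r (block z i)) -scalerBl.
    by rewrite norm2Z ger0_norm //; lra.
  rewrite hT.
  apply: le_trans (sqrt_sum_le _ (fun i => norm2_ge0 (block z i))).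
  rewrite norm2E -{1}(ger0_norm (ltW sK0)) -sqrtr_sqr -sqrtrM ?sqr_ge0 //.
  by rewrite ler_sqrt // sumr_ge0 // => i _; rewrite sqr_ge0.
rewrite /sigmaK; case: ifP => hrank.
  set w : 'cV[R]_(m * p) := \col_k (if blk_div k \in Lam then - z k 0 else 0).
  have [X hX] : exists X, w = D *m X.
    have : (w^T <= D^T)%MS by apply: submx_full; rewrite /row_full mxrank_tr (eqP hrank).
    case/submxP => Y hY; exists Y^T; by rewrite -(trmxK w) hY trmx_mul trmxK.
  have [s0 _ hLA2] := sigma_min_facts hD.
  have [d [hd hsq]] := hLA2 X.
  move: hd hsq; rewrite -hX => hd hsq.
  exists d; split => //.
    move=> i hi; rewrite hd; apply/matrixP => j k; rewrite (ord1 k) !mxE blk_divK hi.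
    by [].
  apply: le_trans hsq _.
  rewrite sqv_blk [X in _ <= X]big_mkcond /=; apply: ler_sum => i _.
  case: ifP => hi.
    rewrite le_eqVlt; apply/orP; left; apply/eqP; congr (_ ^+ 2).
    rewrite -[in RHS]norm2N; congr norm2; apply/matrixP => j k.
    by rewrite (ord1 k) !mxE blk_divK hi.
  rewrite le_eqVlt; apply/orP; left; apply/eqP.
  have -> : block w i = 0 by apply/matrixP => j k; rewrite !mxE blk_divK hi.
  by rewrite norm2E /sqv big1 ?sqrtr0 ?expr0n // => j _; rewrite mxE expr0n.
set B := subblocks D Lam.
set u := xbar - x.
have Du : D *m u = - z by rewrite /u /z mulmxBr hDx opprB.
have hBu : sqv (B *m u) = \sum_(i in Lam) norm2 (block z i) ^+ 2.
  by rewrite sqv_sub Du; apply: eq_bigr => i _; rewrite blockN norm2N.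
have Bn0 : B != 0.
  apply/negP => /eqP B0; move: Tpos; rewrite hT.
  have : sqv (B *m u) = 0 by rewrite B0 mul0mx /sqv big1 // => j _; rewrite mxE expr0n.
  rewrite hBu => /eqP; rewrite psumr_eq0; last by move=> i _; rewrite sqr_ge0.
  move=> /allP H; rewrite big1 ?ltxx // => i hi.
  by have := H i (mem_index_enum _); rewrite hi /= sqrf_eq0 => /eqP.
have [sB0 _ hLA2] := sigma_min_facts Bn0.
set S' := [set s | exists L : {set 'I_m},
   [/\ #|L| = (m - K)%N, subblocks D L != 0 & s = sigma_min (subblocks D L)]].
have sub : S' `<=` [set y | y \in [seq sigma_min (subblocks D L) | L : {set 'I_m} <- enum [set: {set 'I_m}]]].
  move=> _ [L [_ _ ->]] /=.
  by apply: (map_f (fun L : {set 'I_m} => sigma_min (subblocks D L))); rewrite mem_enum inE.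
have ne : S' !=set0 by exists (sigma_min B); exists Lam.
have [hS hinf] := fin_inf sub ne.
have sKpos : 0 < inf S'.
  have [L [_ hLn0 ->]] := hS.
  by have [] := sigma_min_facts hLn0.
have sKle : inf S' <= sigma_min B by apply: hinf; exists Lam.
have [d [hd hsq]] := hLA2 u.
exists d; split => //.
  move=> i hi; apply/matrixP => j k; rewrite (ord1 k).
  set r := blk_idx (enum_rank_in hi i) j.
  have := congr1 (fun X : 'cV[R]_(#|Lam| * p) => X r 0) hd.
  rewrite /= !sub_row /r blk_divK blk_modK enum_rankK_in // Du => hh.
  by rewrite [LHS]mxE hh [RHS]mxE [in RHS]mxE mxE.
rewrite -hBu; apply: le_trans hsq.
apply: ler_wpM2r; first exact: sqv_ge0.
by rewrite lerXn2r // nnegrE ltW.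
Qed.

End Dir.

End MDir.
Import MDir.

Module MMain.
Import Order.TTheory GRing.Theory Num.Theory.
Import numFieldNormedType.Exports.
Set Implicit Arguments. Unset Strict Implicit.
Local Open Scope classical_set_scope.
Local Open Scope ring_scope.

Section PA.
Variable R : realType.

Lemma zid1 q (a b c e : 'cV[R]_q) : -a + (c - e) = b - (a + e) - (b - c).
Proof. apply/matrixP => i j; rewrite !mxE; lra. Qed.

Lemma zid2 q (t : R) (b a a' s s' : 'cV[R]_q) :
  b - ((a + t *: a') + (s + t *: s')) = 1 *: (b - (a + s)) + (-t) *: (a' + s').
Proof. apply/matrixP => i j; rewrite !mxE; lra. Qed.

Lemma zid3 k q (D : 'M[R]_(k, q)) (x xb : 'cV[R]_q) (t : R) :
  D *m (x + t *: (xb - x)) - D *m xb = (1 - t) *: (D *m x - D *m xb).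
Proof.
rewrite mulmxDr -scalemxAr mulmxBr.
apply/matrixP => i j; rewrite !mxE; lra.
Qed.

Lemma dot_sub q (x y : 'cV[R]_q) : dot x (x - y) = sqv x - dot x y.
Proof. by rewrite /dot /sqv -sumrB; apply: eq_bigr => i _; rewrite !mxE; ring. Qed.

Lemma dotNl q (x y : 'cV[R]_q) : dot (- x) y = - dot x y.
Proof. by rewrite /dot -sumrN; apply: eq_bigr => i _; rewrite !mxE mulNr. Qed.

Lemma norm2N' q (x : 'cV[R]_q) : norm2 (- x) = norm2 x.
Proof. by rewrite -scaleN1r norm2Z normrN normr1 mul1r. Qed.

Lemma trimmedZ K m p a (z : 'cV[R]_(m * p)) : 0 <= a ->
  trimmed K m p (a *: z) <= a * trimmed K m p z.
Proof.
move=> a0; have [[Lam hL ->] _] := trimmed_spec K z.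
have [_ hle] := trimmed_spec K (a *: z).
apply: le_trans (hle _ hL) _; rewrite mulr_sumr le_eqVlt; apply/orP; left.
by apply/eqP; apply: eq_bigr => i _; rewrite blockZ norm2Z ger0_norm.
Qed.

Lemma norm_bound k q (B : 'M[R]_(k, q)) (x : 'cV[R]_q) :
  norm2 (B *m x) <= spec_norm B * norm2 x.
Proof.
rewrite !norm2E -(ger0_norm (spec_norm_ge0 B)) -sqrtr_sqr -sqrtrM ?sqr_ge0 //.
by rewrite ler_sqrt ?spec_norm_bound // mulr_ge0 ?sqr_ge0 ?sqv_ge0.
Qed.

Lemma partA :
  (forall (L n0 q : nat) (n m p K : 'I_L -> nat) (gamma : 'I_L -> R)
          (c : forall l : 'I_L, 'cV[R]_(m l * p l))
          (D : forall l : 'I_L, 'M[R]_(m l * p l, n l))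
          (b : 'cV[R]_q) (A0 : 'M[R]_(q, n0)) (A : forall l : 'I_L, 'M[R]_(q, n l))
          (xbar : forall l : 'I_L, 'cV[R]_(n l)),
     (forall l, 0 < gamma l) ->
     (forall l, (K l < m l)%N) ->
     (forall l, D l != 0) ->
     (forall l, D l *m xbar l = c l) ->
     (forall l, gamma l >
        (sigmaK (K l) (m l) (p l) (n l) (D l))^-1 * spec_norm (A l)
          * norm2 (b - \sum_(k < L) A k *m xbar k)) ->
     let f := fun (x0 : 'cV[R]_n0) (xs : forall l : 'I_L, 'cV[R]_(n l)) =>
        2^-1 * norm2 (b - (A0 *m x0 + \sum_(l < L) A l *m xs l)) ^+ 2 in
     let Phi := fun (x0 : 'cV[R]_n0) (xs : forall l : 'I_L, 'cV[R]_(n l)) =>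
        f x0 xs + \sum_(l < L) gamma l * trimmed (K l) (m l) (p l) (D l *m xs l - c l) in
     forall (x0 : 'cV[R]_n0) (xs : forall l : 'I_L, 'cV[R]_(n l)),
       dstationary Phi x0 xs ->
       forall l, trimmed (K l) (m l) (p l) (D l *m xs l - c l) = 0).
Proof.
move=> L n0 q n m p K gamma c D b A0 A xbar hg hK hD hDx hcond f Phi x0 xs hds l.
apply/eqP; rewrite eq_le trimmed_ge0 andbT leNgt; apply/negP => Tpos.
set T := fun l => trimmed (K l) (m l) (p l) (D l *m xs l - c l).
set r := b - (A0 *m x0 + \sum_(l < L) A l *m xs l).
set rb := b - \sum_(k < L) A k *m xbar k.
have diffE : forall (d0 : 'cV[R]_n0) (ds : forall l, 'cV[R]_(n l)) t,
  Phi (x0 + t *: d0) (fun l => xs l + t *: ds l) - Phi x0 xs =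
  t * (- dot r (A0 *m d0 + \sum_l A l *m ds l)
       + t * (2^-1 * sqv (A0 *m d0 + \sum_l A l *m ds l)))
  + \sum_l gamma l * (trimmed (K l) (m l) (p l) (D l *m (xs l + t *: ds l) - c l) - T l).
  move=> d0 ds t; rewrite /Phi /f.
  have -> : b - (A0 *m (x0 + t *: d0) + \sum_l A l *m (xs l + t *: ds l)) =
            1 *: r + (-t) *: (A0 *m d0 + \sum_l A l *m ds l).
    rewrite mulmxDr (eq_bigr (fun l => A l *m xs l + t *: (A l *m ds l))); last first.
      by move=> l' _; rewrite mulmxDr scalemxAr.
    rewrite big_split /= -scaler_sumr -scalemxAr.
    exact: zid2.
  rewrite !norm2_sqr sqv_lin.
  rewrite [X in _ = _ + X](eq_bigr (fun l => gamma l * trimmed (K l) (m l) (p l) (D l *m (xs l + t *: ds l) - c l) - gamma l * T l)); last by move=> l' _; rewrite mulrBr.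
  by rewrite sumrB /T -/r; field.
have conclude : forall (d0 : 'cV[R]_n0) (ds : forall l, 'cV[R]_(n l)) (a B : R), a < 0 ->
    (forall t, 0 < t -> t <= 1 ->
       Phi (x0 + t *: d0) (fun l => xs l + t *: ds l) - Phi x0 xs <= t * (a + t * B)) -> False.
  move=> e0 es a B a0 hb; have [v hv v0] := hds e0 es.
  have H : forall s, 0 < s -> s <= 1 ->
     (Phi (x0 + s *: e0) (fun l => xs l + s *: es l) - Phi x0 xs) / s <= a + s * B.
    by move=> s s0 s1; rewrite ler_pdivrMr // mulrC; exact: hb.
  have va := lim_le_affine hv H; lra.
have [hr|hr] : norm2 rb <= norm2 r \/ norm2 r < norm2 rb.
  by case: leP => h; [left|right].
  apply: (conclude (- x0) (fun l => xbar l - xs l) (- (gamma l * T l)) (2^-1 * sqv (r - rb))).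
    by rewrite oppr_lt0 mulr_gt0.
  move=> t t0 t1; rewrite diffE.
  have wE : A0 *m - x0 + \sum_l A l *m (xbar l - xs l) = r - rb.
    rewrite mulmxN (eq_bigr (fun l => A l *m xbar l - A l *m xs l)); last by move=> *; rewrite mulmxBr.
    by rewrite sumrB; exact: zid1.
  rewrite wE.
  have hdot : - dot r (r - rb) <= 0.
    rewrite dot_sub opprB subr_le0 -norm2_sqr.
    by apply: le_trans (CS r rb) _; rewrite expr2 ler_wpM2l // norm2_ge0.
  have hT : \sum_l' gamma l' * (trimmed (K l') (m l') (p l') (D l' *m (xs l' + t *: (xbar l' - xs l')) - c l') - T l') <= t * (- (gamma l * T l)).
    have hterm : forall l', gamma l' * (trimmed (K l') (m l') (p l') (D l' *m (xs l' + t *: (xbar l' - xs l')) - c l') - T l') <= t * (- (gamma l' * T l')).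
      move=> l'; rewrite -(hDx l') zid3 (hDx l').
      have := trimmedZ (K l') (D l' *m xs l' - c l') (a := 1 - t) ltac:(lra).
      rewrite -/(T l') => h.
      have g0 := hg l'.
      have : gamma l' * (trimmed (K l') (m l') (p l') ((1 - t) *: (D l' *m xs l' - c l')) - T l') <= gamma l' * ((1 - t) * T l' - T l').
        by rewrite ler_pM2l // lerD2r.
      move=> h2; apply: le_trans h2 _; rewrite le_eqVlt; apply/orP; left; apply/eqP; ring.
    rewrite (bigD1 l) //=.
    have hrest : \sum_(l' < L | l' != l) gamma l' * (trimmed (K l') (m l') (p l') (D l' *m (xs l' + t *: (xbar l' - xs l')) - c l') - T l') <= 0.
      apply: sumr_le0 => l' _; apply: le_trans (hterm l') _.
      by rewrite mulr_ge0_le0 ?(ltW t0) // oppr_le0 mulr_ge0 // ?(ltW (hg l')) // trimmed_ge0.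
    have := hterm l; lra.
  have h1 : t * (- dot r (r - rb)) <= 0 by rewrite mulr_ge0_le0 // ltW.
  lra.
have H : forall l', exists d : 'cV[R]_(n l'), l' = l ->
   [/\ 0 < sigmaK (K l') (m l') (p l') (n l') (D l'),
       forall t, 0 <= t -> t <= 1 ->
         trimmed (K l') (m l') (p l') (D l' *m (xs l' + t *: d) - c l') <= (1 - t) * T l' &
       sigmaK (K l') (m l') (p l') (n l') (D l') * norm2 d <= T l'].
  move=> l'; case: (eqVneq l' l) => [->|hne]; last by exists 0 => h; rewrite h eqxx in hne.
  have [d hd] := dir_exists (hD l) (hDx l) Tpos.
  by exists d.
pose dd := fun l' => projT1 (cid (H l')).
have [sK0 hdT hdn] := projT2 (cid (H l)) erefl.
rewrite -/(dd l) in hdT hdn.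
pose ds := fun l' => (if l' == l then 1 else 0) *: dd l'.
set sK := sigmaK (K l) (m l) (p l) (n l) (D l) in sK0 hdT hdn hcond.
set sA := spec_norm (A l).
apply: (conclude 0 ds (T l * (sK^-1 * sA * norm2 rb - gamma l)) (2^-1 * sqv (A l *m dd l))).
  by rewrite pmulr_rlt0 // subr_lt0; exact: hcond.
move=> t t0 t1; rewrite diffE.
have wE : A0 *m 0 + \sum_l' A l' *m ds l' = A l *m dd l.
  rewrite mulmx0 add0r (bigD1 l) //= big1 ?addr0; first by rewrite /ds eqxx scale1r.
  by move=> l' hne; rewrite /ds (negbTE hne) scale0r mulmx0.
rewrite wE.
have hT : \sum_l' gamma l' * (trimmed (K l') (m l') (p l') (D l' *m (xs l' + t *: ds l') - c l') - T l') <= gamma l * ((1 - t) * T l - T l).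
  rewrite (bigD1 l) //= big1 ?addr0.
    rewrite /ds eqxx scale1r ler_pM2l //; rewrite lerD2r; exact: hdT (ltW t0) t1.
  move=> l' hne; rewrite /ds (negbTE hne) scale0r scaler0 addr0.
  by rewrite /T subrr mulr0.
have hw : - dot r (A l *m dd l) <= norm2 rb * (sA * norm2 (dd l)).
  rewrite -dotNl; apply: le_trans (CS _ _) _; rewrite norm2N'.
  apply: ler_pM; [exact: norm2_ge0 | exact: norm2_ge0 | exact: ltW | exact: norm_bound].
have sA0 : 0 <= sA by exact: spec_norm_ge0.
have hd2 : norm2 (dd l) <= sK^-1 * T l.
  by rewrite ler_pdivlMl.
have hw2 : norm2 rb * (sA * norm2 (dd l)) <= T l * (sK^-1 * sA * norm2 rb).
  have : sA * norm2 (dd l) <= sA * (sK^-1 * T l) by rewrite ler_wpM2l.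
  move=> h; have rb0 := norm2_ge0 rb.
  apply: le_trans (ler_wpM2l rb0 h) _; rewrite le_eqVlt; apply/orP; left; apply/eqP; ring.
have hs : 0 <= sqv (A l *m dd l) by exact: sqv_ge0.
nra.
Qed.
End PA.

End MMain.
Import MMain.

Module MPB.
Import Order.TTheory GRing.Theory Num.Theory.
Import numFieldNormedType.Exports.
Set Implicit Arguments. Unset Strict Implicit.
Local Open Scope classical_set_scope.
Local Open Scope ring_scope.

Section PBL.
Variable R : realType.

Lemma Eent n (v : 'cV[R]_n) k :
  (castmx (esym (muln1 n), erefl) (1%:M *m v) - 0) k 0 = v (cast_ord (muln1 n) k) 0.
Proof.
rewrite !mxE castmxE mul1mx subr0 /=.
by congr (v _ _); apply: val_inj.
Qed.

Lemma Eblk n (v : 'cV[R]_n) i :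
  norm2 (block (castmx (esym (muln1 n), erefl) (1%:M *m v) - 0) i) = `|v i 0|.
Proof.
rewrite norm2E /sqv big_ord1 mxE Eent.
have -> : cast_ord (muln1 n) (blk_idx i ord0) = i by apply: val_inj => /=; rewrite muln1 addn0.
by rewrite sqrtr_sqr.
Qed.

Lemma Tspec_b n K (v : 'cV[R]_n) :
  (exists2 Lam : {set 'I_n}, #|Lam| = (n - K)%N &
     trimmed K n 1 (castmx (esym (muln1 n), erefl) (1%:M *m v) - 0) = \sum_(i in Lam) `|v i 0|) /\
  (forall Lam : {set 'I_n}, #|Lam| = (n - K)%N ->
     trimmed K n 1 (castmx (esym (muln1 n), erefl) (1%:M *m v) - 0) <= \sum_(i in Lam) `|v i 0|).
Proof.
have [[Lam hL hT] hle] := trimmed_spec K (castmx (esym (muln1 n), erefl) (1%:M *m v) - 0).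
split.
  by exists Lam => //; rewrite hT; apply: eq_bigr => i _; rewrite Eblk.
move=> L hL'; apply: le_trans (hle _ hL') _.
by rewrite le_eqVlt; apply/orP; left; apply/eqP; apply: eq_bigr => i _; rewrite Eblk.
Qed.

Lemma T_step n K (v u : 'cV[R]_n) (s : R) :
  (forall Lam : {set 'I_n}, (forall i, i \in Lam -> `|u i 0| <= s * `|v i 0|) ->
     #|Lam| = (n - K)%N ->
     trimmed K n 1 (castmx (esym (muln1 n), erefl) (1%:M *m v) - 0) = \sum_(i in Lam) `|v i 0| ->
     trimmed K n 1 (castmx (esym (muln1 n), erefl) (1%:M *m u) - 0) <=
     s * trimmed K n 1 (castmx (esym (muln1 n), erefl) (1%:M *m v) - 0)).
Proof.
move=> Lam hi hL hT.
have [_ hle] := Tspec_b K u.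
apply: le_trans (hle _ hL) _; rewrite hT mulr_sumr; apply: ler_sum => i /hi //.
Qed.

Lemma norm1_ge0 n (v : 'cV[R]_n) : 0 <= norm1 v.
Proof. by apply: sumr_ge0 => i _. Qed.

Lemma bigmax_ge0 k (F : 'I_k -> R) : 0 <= \big[Num.max/0]_(j < k) F j.
Proof. by elim/big_rec: _ => // i x _ hx; rewrite le_max hx orbT. Qed.

Lemma le_bigmax0 k (F : 'I_k -> R) j : F j <= \big[Num.max/0]_(j < k) F j.
Proof.
rewrite /index_enum; have : j \in index_enum 'I_k by rewrite mem_index_enum.
rewrite /index_enum; elim: (Finite.enum _) => [//|a s IH].
rewrite inE big_cons => /orP[/eqP ->|hj]; first by rewrite le_max lexx.
by rewrite le_max IH ?orbT.
Qed.

Lemma abs_dot q (r c : 'cV[R]_q) : `|dot r c| <= norm2 r * norm2 c.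
Proof.
rewrite ler_norml CS andbT.
have := CS (- r) c; rewrite dotNl norm2N'; lra.
Qed.

Lemma dot_mul q k (r : 'cV[R]_q) (A : 'M[R]_(q, k)) (d : 'cV[R]_k) :
  dot r (A *m d) = \sum_j d j 0 * dot r (col j A).
Proof.
rewrite /dot; under eq_bigr => i _ do rewrite mxE mulr_sumr.
rewrite exchange_big /=; apply: eq_bigr => j _.
rewrite mulr_sumr; apply: eq_bigr => i _; rewrite !mxE; ring.
Qed.


Lemma norm1_scale n (v : 'cV[R]_n) t : t <= 1 -> norm1 (v + t *: - v) = (1 - t) * norm1 v.
Proof.
move=> t1; rewrite /norm1 mulr_sumr; apply: eq_bigr => i _; rewrite !mxE.
have -> : v i 0 + t * - v i 0 = (1 - t) * v i 0 by ring.
by rewrite normrM ger0_norm // subr_ge0.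
Qed.

Lemma dirb_ent n (v : 'cV[R]_n) (Lam : {set 'I_n}) t i :
  (v + t *: \col_j (if j \in Lam then - v j 0 else 0)) i 0 =
  if i \in Lam then (1 - t) * v i 0 else v i 0.
Proof. by rewrite !mxE; case: ifP => _; ring. Qed.

Lemma norm1_dir n (v : 'cV[R]_n) (Lam : {set 'I_n}) t : 0 <= t -> t <= 1 ->
  norm1 (v + t *: \col_j (if j \in Lam then - v j 0 else 0)) =
  norm1 v - t * \sum_(i in Lam) `|v i 0|.
Proof.
move=> t0 t1; rewrite /norm1.
transitivity (\sum_i (`|v i 0| - (if i \in Lam then t * `|v i 0| else 0))).
  apply: eq_bigr => i _; rewrite dirb_ent; case: ifP => _; last by rewrite subr0.
  rewrite normrM ger0_norm ?subr_ge0 //; ring.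
by rewrite sumrB -big_mkcond /= mulr_sumr.
Qed.

Lemma partB :
  (forall (L q : nat) (n K : 'I_L -> nat) (gamma eta : 'I_L -> R)
          (b : 'cV[R]_q) (A : forall l : 'I_L, 'M[R]_(q, n l)),
     (forall l, 0 < gamma l) ->
     (forall l, (K l < n l)%N) ->
     (forall l, 0 <= eta l) ->
     (forall l, gamma l >
        (\big[Num.max/0]_(j < n l) norm2 (col j (A l))) * norm2 b - eta l) ->
     let f := fun (x0 : 'cV[R]_0) (xs : forall l : 'I_L, 'cV[R]_(n l)) =>
        2^-1 * norm2 (b - \sum_(l < L) A l *m xs l) ^+ 2
        + \sum_(l < L) eta l * norm1 (xs l) in
     let Phi := fun (x0 : 'cV[R]_0) (xs : forall l : 'I_L, 'cV[R]_(n l)) =>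
        f x0 xs + \sum_(l < L) gamma l *
          trimmed (K l) (n l) 1
            (castmx (esym (muln1 (n l)), erefl) (1%:M *m xs l) - 0) in
     forall (x0 : 'cV[R]_0) (xs : forall l : 'I_L, 'cV[R]_(n l)),
       dstationary Phi x0 xs ->
       forall l, trimmed (K l) (n l) 1
         (castmx (esym (muln1 (n l)), erefl) (1%:M *m xs l) - 0) = 0).
Proof.
move=> L q n K gamma eta b A hg hK heta hcond f Phi x0 xs hds l.
apply/eqP; rewrite eq_le trimmed_ge0 andbT leNgt; apply/negP => Tpos.
set T := fun l => trimmed (K l) (n l) 1 (castmx (esym (muln1 (n l)), erefl) (1%:M *m xs l) - 0).
set r := b - \sum_(l < L) A l *m xs l.
set M := fun l => \big[Num.max/0]_(j < n l) norm2 (col j (A l)).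
have diffE : forall (d0 : 'cV[R]_0) (ds : forall l, 'cV[R]_(n l)) t,
  Phi (x0 + t *: d0) (fun l => xs l + t *: ds l) - Phi x0 xs =
  t * (- dot r (\sum_l A l *m ds l) + t * (2^-1 * sqv (\sum_l A l *m ds l)))
  + \sum_l eta l * (norm1 (xs l + t *: ds l) - norm1 (xs l))
  + \sum_l gamma l * (trimmed (K l) (n l) 1 (castmx (esym (muln1 (n l)), erefl) (1%:M *m (xs l + t *: ds l)) - 0) - T l).
  move=> d0 ds t; rewrite /Phi /f.
  have -> : b - \sum_l A l *m (xs l + t *: ds l) = 1 *: r + (-t) *: (\sum_l A l *m ds l).
    rewrite (eq_bigr (fun l => A l *m xs l + t *: (A l *m ds l))); last first.
      by move=> l' _; rewrite mulmxDr scalemxAr.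
    rewrite big_split /= -scaler_sumr.
    by apply/matrixP => i j; rewrite !mxE; lra.
  rewrite !norm2_sqr sqv_lin.
  rewrite [X in _ = _ + X + _](eq_bigr (fun l => eta l * norm1 (xs l + t *: ds l) - eta l * norm1 (xs l))); last by move=> l' _; rewrite mulrBr.
  rewrite [X in _ = _ + X](eq_bigr (fun l => gamma l * trimmed (K l) (n l) 1 (castmx (esym (muln1 (n l)), erefl) (1%:M *m (xs l + t *: ds l)) - 0) - gamma l * T l)); last by move=> l' _; rewrite mulrBr.
  by rewrite !sumrB /T -/r; field.
have conclude : forall (d0 : 'cV[R]_0) (ds : forall l, 'cV[R]_(n l)) (a B : R), a < 0 ->
    (forall t, 0 < t -> t <= 1 ->
       Phi (x0 + t *: d0) (fun l => xs l + t *: ds l) - Phi x0 xs <= t * (a + t * B)) -> False.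
  move=> e0 es a B a0 hb; have [v hv v0] := hds e0 es.
  have H : forall s, 0 < s -> s <= 1 ->
     (Phi (x0 + s *: e0) (fun l => xs l + s *: es l) - Phi x0 xs) / s <= a + s * B.
    by move=> s s0 s1; rewrite ler_pdivrMr // mulrC; exact: hb.
  have va := lim_le_affine hv H; lra.
have [hr|hr] : norm2 b <= norm2 r \/ norm2 r < norm2 b.
  by case: leP => h; [left|right].
  apply: (conclude 0 (fun l => - xs l) (- (gamma l * T l)) (2^-1 * sqv (r - b))).
    by rewrite oppr_lt0 mulr_gt0.
  move=> t t0 t1; rewrite diffE.
  have wE : \sum_l A l *m - xs l = r - b.
    rewrite (eq_bigr (fun l => - (A l *m xs l))); last by move=> *; rewrite mulmxN.
    rewrite sumrN /r; apply/matrixP => i j; rewrite !mxE; lra.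
  rewrite wE.
  have hdot : - dot r (r - b) <= 0.
    rewrite dot_sub opprB subr_le0 -norm2_sqr.
    by apply: le_trans (CS r b) _; rewrite expr2 ler_wpM2l // norm2_ge0.
  have heta' : \sum_l' eta l' * (norm1 (xs l' + t *: - xs l') - norm1 (xs l')) <= 0.
    apply: sumr_le0 => l' _; rewrite norm1_scale //.
    have -> : (1 - t) * norm1 (xs l') - norm1 (xs l') = - (t * norm1 (xs l')) by ring.
    by rewrite mulrN oppr_le0 mulr_ge0 // mulr_ge0 ?norm1_ge0 // ltW.
  have hterm : forall l', gamma l' * (trimmed (K l') (n l') 1 (castmx (esym (muln1 (n l')), erefl) (1%:M *m (xs l' + t *: - xs l')) - 0) - T l') <= t * (- (gamma l' * T l')).
    move=> l'.
    have [[Lam hL hT] _] := Tspec_b (K l') (xs l').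
    have h' : trimmed (K l') (n l') 1 (castmx (esym (muln1 (n l')), erefl) (1%:M *m (xs l' + t *: - xs l')) - 0) <= (1 - t) * T l'.
      apply: (T_step _ hL hT) => i _; rewrite !mxE.
      have -> : xs l' i 0 + t * - xs l' i 0 = (1 - t) * xs l' i 0 by ring.
      by rewrite normrM ger0_norm ?subr_ge0.
    have g0 := hg l'.
    have : gamma l' * (trimmed (K l') (n l') 1 (castmx (esym (muln1 (n l')), erefl) (1%:M *m (xs l' + t *: - xs l')) - 0) - T l') <= gamma l' * ((1 - t) * T l' - T l').
      by rewrite ler_pM2l // lerD2r.
    move=> h2; apply: le_trans h2 _; rewrite le_eqVlt; apply/orP; left; apply/eqP; ring.
  have hT : \sum_l' gamma l' * (trimmed (K l') (n l') 1 (castmx (esym (muln1 (n l')), erefl) (1%:M *m (xs l' + t *: - xs l')) - 0) - T l') <= t * (- (gamma l * T l)).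
    rewrite (bigD1 l) //=.
    have hrest : \sum_(l' < L | l' != l) gamma l' * (trimmed (K l') (n l') 1 (castmx (esym (muln1 (n l')), erefl) (1%:M *m (xs l' + t *: - xs l')) - 0) - T l') <= 0.
      apply: sumr_le0 => l' _; apply: le_trans (hterm l') _.
      by rewrite mulr_ge0_le0 ?(ltW t0) // oppr_le0 mulr_ge0 // ?(ltW (hg l')) // trimmed_ge0.
    have := hterm l; lra.
  have h1 : t * (- dot r (r - b)) <= 0 by rewrite mulr_ge0_le0 // ltW.
  lra.
have H : forall l', exists d : 'cV[R]_(n l'), l' = l ->
   [/\ forall t, 0 <= t -> t <= 1 ->
         trimmed (K l') (n l') 1 (castmx (esym (muln1 (n l')), erefl) (1%:M *m (xs l' + t *: d)) - 0) <= (1 - t) * T l',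
       forall t, 0 <= t -> t <= 1 -> norm1 (xs l' + t *: d) = norm1 (xs l') - t * T l' &
       - dot r (A l' *m d) <= norm2 r * M l' * T l'].
  move=> l'; case: (eqVneq l' l) => [->|hne]; last by exists 0 => h; rewrite h eqxx in hne.
  have [[Lam hL hT] _] := Tspec_b (K l) (xs l).
  have hT' : T l = \sum_(i in Lam) `|xs l i 0| := hT.
  exists (\col_j (if j \in Lam then - xs l j 0 else 0)) => _; split.
  - move=> t t0 t1; apply: (T_step _ hL hT) => i hi.
    by rewrite dirb_ent hi normrM ger0_norm ?subr_ge0.
  - by move=> t t0 t1; rewrite norm1_dir // hT'.
  - rewrite dot_mul -sumrN.
    apply: le_trans (_ : _ <= \sum_j `|(\col_j (if j \in Lam then - xs l j 0 else 0)) j 0| * (norm2 r * M l)) _.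
      apply: ler_sum => j _.
      set x := (\col_j0 (if j0 \in Lam then - xs l j0 0 else 0)) j 0.
      have hc : `|dot r (col j (A l))| <= norm2 r * M l.
        apply: le_trans (abs_dot _ _) _; apply: ler_wpM2l; first exact: norm2_ge0.
        exact: le_bigmax0 (fun j => norm2 (col j (A l))) j.
      apply: le_trans (_ : _ <= `|x * dot r (col j (A l))|) _; first by rewrite -normrN ler_norm.
      by rewrite normrM ler_wpM2l.
    rewrite -mulr_suml mulrC hT'; apply: ler_wpM2l.
      by rewrite mulr_ge0 ?norm2_ge0 // /M bigmax_ge0.
    rewrite [X in _ <= X]big_mkcond /=; apply: ler_sum => i _.
    by rewrite mxE; case: ifP => _; rewrite ?normrN ?normr0.
pose dd := fun l' => projT1 (cid (H l')).
have [hdT hdn hdd] := projT2 (cid (H l)) erefl.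
rewrite -/(dd l) in hdT hdn hdd.
pose ds := fun l' => (if l' == l then 1 else 0) *: dd l'.
have M0 : 0 <= M l by rewrite /M bigmax_ge0.
have T0 : 0 <= T l by exact: ltW.
apply: (conclude 0 ds (T l * (M l * norm2 b - eta l - gamma l)) (2^-1 * sqv (A l *m dd l))).
  rewrite pmulr_rlt0 //; have := hcond l; rewrite -/(M l); lra.
move=> t t0 t1; rewrite diffE.
have wE : \sum_l' A l' *m ds l' = A l *m dd l.
  rewrite (bigD1 l) //= big1 ?addr0; first by rewrite /ds eqxx scale1r.
  by move=> l' hne; rewrite /ds (negbTE hne) scale0r mulmx0.
rewrite wE.
have hE : \sum_l' eta l' * (norm1 (xs l' + t *: ds l') - norm1 (xs l')) = eta l * (- (t * T l)).
  rewrite (bigD1 l) //= big1 ?addr0.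
    by rewrite /ds eqxx scale1r hdn ?(ltW t0) //; congr (_ * _); ring.
  by move=> l' hne; rewrite /ds (negbTE hne) scale0r scaler0 addr0 subrr mulr0.
have hT : \sum_l' gamma l' * (trimmed (K l') (n l') 1 (castmx (esym (muln1 (n l')), erefl) (1%:M *m (xs l' + t *: ds l')) - 0) - T l') <= gamma l * ((1 - t) * T l - T l).
  rewrite (bigD1 l) //= big1 ?addr0.
    by rewrite /ds eqxx scale1r ler_pM2l // lerD2r; exact: hdT (ltW t0) t1.
  move=> l' hne; rewrite /ds (negbTE hne) scale0r scaler0 addr0.
  by rewrite /T subrr mulr0.
have hrb : norm2 r * M l * T l <= norm2 b * M l * T l.
  by rewrite ler_wpM2r // ler_wpM2r // ltW.
have h1 : t * (- dot r (A l *m dd l)) <= t * (norm2 b * M l * T l).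
  by rewrite ler_wpM2l ?(ltW t0) //; apply: le_trans hdd hrb.
rewrite hE.
have hs : 0 <= sqv (A l *m dd l) by exact: sqv_ge0.
nra.
Qed.
End PBL.

End MPB.
Import MPB.

Theorem mainTheorem7 (R : realType) :
  (* (a) least-squares loss *)
  (forall (L n0 q : nat) (n m p K : 'I_L -> nat) (gamma : 'I_L -> R)
          (c : forall l : 'I_L, 'cV[R]_(m l * p l))
          (D : forall l : 'I_L, 'M[R]_(m l * p l, n l))
          (b : 'cV[R]_q) (A0 : 'M[R]_(q, n0)) (A : forall l : 'I_L, 'M[R]_(q, n l))
          (xbar : forall l : 'I_L, 'cV[R]_(n l)),
     (forall l, 0 < gamma l) ->
     (forall l, (K l < m l)%N) ->
     (forall l, D l != 0) ->
     (forall l, D l *m xbar l = c l) ->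
     (forall l, gamma l >
        (sigmaK (K l) (m l) (p l) (n l) (D l))^-1 * spec_norm (A l)
          * norm2 (b - \sum_(k < L) A k *m xbar k)) ->
     let f := fun (x0 : 'cV[R]_n0) (xs : forall l : 'I_L, 'cV[R]_(n l)) =>
        2^-1 * norm2 (b - (A0 *m x0 + \sum_(l < L) A l *m xs l)) ^+ 2 in
     let Phi := fun (x0 : 'cV[R]_n0) (xs : forall l : 'I_L, 'cV[R]_(n l)) =>
        f x0 xs + \sum_(l < L) gamma l * trimmed (K l) (m l) (p l) (D l *m xs l - c l) in
     forall (x0 : 'cV[R]_n0) (xs : forall l : 'I_L, 'cV[R]_(n l)),
       dstationary Phi x0 xs ->
       forall l, trimmed (K l) (m l) (p l) (D l *m xs l - c l) = 0)
  /\
  (* (b) least-squares loss plus weighted l1 terms; n0 = 0, p_l = 1, D_l = I, c_l = 0 *)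
  (forall (L q : nat) (n K : 'I_L -> nat) (gamma eta : 'I_L -> R)
          (b : 'cV[R]_q) (A : forall l : 'I_L, 'M[R]_(q, n l)),
     (forall l, 0 < gamma l) ->
     (forall l, (K l < n l)%N) ->
     (forall l, 0 <= eta l) ->
     (forall l, gamma l >
        (\big[Num.max/0]_(j < n l) norm2 (col j (A l))) * norm2 b - eta l) ->
     let f := fun (x0 : 'cV[R]_0) (xs : forall l : 'I_L, 'cV[R]_(n l)) =>
        2^-1 * norm2 (b - \sum_(l < L) A l *m xs l) ^+ 2
        + \sum_(l < L) eta l * norm1 (xs l) in
     let Phi := fun (x0 : 'cV[R]_0) (xs : forall l : 'I_L, 'cV[R]_(n l)) =>
        f x0 xs + \sum_(l < L) gamma l *
          trimmed (K l) (n l) 1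
            (castmx (esym (muln1 (n l)), erefl) (1%:M *m xs l) - 0) in
     forall (x0 : 'cV[R]_0) (xs : forall l : 'I_L, 'cV[R]_(n l)),
       dstationary Phi x0 xs ->
       forall l, trimmed (K l) (n l) 1
         (castmx (esym (muln1 (n l)), erefl) (1%:M *m xs l) - 0) = 0).
Proof.
split; [exact: (@partA R) | exact: (@partB R)].
Qed.
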